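(* Let $(P,A,\lambda)$ be a marked poset and $(U_1,U_2)$ an admissible decomposition of it. Then the marked chain-order polytope $\mathcal{CO}_{U_1,U_2}(\lambda)$ is a lattice polytope, and it is normal.
   Context: A marked poset is a triple $(P,A,\lambda)$ where $(P,\prec)$ is a finite poset, $A\subseteq P$ contains all minimal and all maximal elements of $P$, and $\lambda:A\to\mathbb{Z}_{\ge 0}$, $a\mapsto\lambda_a$. A decomposition of $(P,A,\lambda)$ is a pair $(U_1,U_2)$ of disjoint sets with $U_1\cup U_2=P\setminus A$; it is admissible if there are no $u_1\in U_1$, $u_2\in U_2$ with $u_1\prec u_2$. Put $A_1=A\cup U_1$. The marked chain-order polytope $\mathcal{CO}_{U_1,U_2}(\lambda)\subset\mathbb{R}^{P\setminus A}$ is the set of $(x_p)_{p\in P\setminus A}$ such that: (i) $x_p\le\lambda_a$ whenever $p\in U_1$, $a\in A$, $p\prec a$; (ii) $\lambda_b\le x_q$ whenever $q\in U_1$, $b\in A$, $b\prec q$; (iii) $x_p\le x_q$ whenever $p,q\in U_1$, $p\prec q$; (iv) $x_p\ge0$ for $p\in U_2$; (v) for every chain $b\prec p_n\prec\cdots\prec p_1\prec a$ with $n\ge1$, $a,b\in A_1$, $p_i\in U_2$: $x_{p_1}+\cdots+x_{p_n}\le\lambda_a-\lambda_b$, where $\lambda_q$ means $x_q$ for $q\in U_1$; (vi) for every chain $p_1\prec\cdots\prec p_s\prec q$ with $q\in U_1$, $p_i\in U_2$: $x_{p_1}+\cdots+x_{p_s}\le x_q$. A lattice polytope $Q\subset\mathbb{R}^d$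 is normal if for every $n\in\mathbb{N}$ the set $nQ\cap\mathbb{Z}^d$ is the $n$-fold Minkowski sum of $Q\cap\mathbb{Z}^d$. *)

(* Defs.v *)
From HB Require Import structures.
From mathcomp Require Import all_boot all_order all_algebra.
Set Implicit Arguments. Unset Strict Implicit. Unset Printing Implicit Defensive.
Import Order.TTheory GRing.Theory Num.Theory.
Local Open Scope ring_scope.

Definition lattice_point (I : finType) (R : numDomainType) (x : {ffun I -> R}) : Prop :=
  forall i, exists z : int, x i = z%:~R.

Definition conv_hull (I : finType) (R : numDomainType)
    (S : seq {ffun I -> R}) (y : {ffun I -> R}) : Prop :=
  exists c : 'I_(size S) -> R,
    [/\ forall k, 0 <= c k, \sum_k c k = 1 & y = \sum_k [ffun i => c k * S`_k i]].

Definition lattice_polytope (I : finType) (R : numDomainType)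
    (Q : {ffun I -> R} -> Prop) : Prop :=
  exists S : seq {ffun I -> R},
    (forall v, v \in S -> lattice_point v) /\ (forall y, Q y <-> conv_hull S y).

Definition normal_polytope (I : finType) (R : numDomainType)
    (Q : {ffun I -> R} -> Prop) : Prop :=
  forall n : nat, (0 < n)%N -> forall y : {ffun I -> R},
    (lattice_point y /\ exists x, Q x /\ y = [ffun i => n%:R * x i]) <->
    (exists xs : 'I_n -> {ffun I -> R},
        (forall k, lattice_point (xs k) /\ Q (xs k)) /\ y = \sum_k xs k).

Definition marked_set (d : Order.disp_t) (P : finPOrderType d) (A : {set P}) : Prop :=
  forall p : P, ((forall q, ~~ (q < p)%O) \/ (forall q, ~~ (p < q)%O)) -> p \in A.

Definition decomposition (d : Order.disp_t) (P : finPOrderType d) (A U1 U2 : {set P}) : Prop :=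
  [disjoint U1 & U2] /\ U1 :|: U2 = ~: A.

Definition admissible (d : Order.disp_t) (P : finPOrderType d) (U1 U2 : {set P}) : Prop :=
  forall u1 u2, u1 \in U1 -> u2 \in U2 -> ~~ (u1 < u2)%O.

Definition coordT (d : Order.disp_t) (P : finPOrderType d) (A : {set P}) : finType :=
  {p : P | p \notin A}.

(* coordinate x_p of x in R^{P\A}, extended by 0 on A (only used for p \notin A) *)
Definition xc (d : Order.disp_t) (P : finPOrderType d) (A : {set P}) (R : numDomainType)
    (x : {ffun coordT A -> R}) (p : P) : R :=
  match @insub P (fun q => q \notin A) (coordT A) p with
  | Some i => x i
  | None => 0
  end.

(* lambda_q, with lambda_q := x_q for q in U1 (i.e. q not in A) *)
Definition lamx (d : Order.disp_t) (P : finPOrderType d) (A : {set P}) (R : numDomainType)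
    (lambda : P -> nat) (x : {ffun coordT A -> R}) (q : P) : R :=
  if q \in A then (lambda q)%:R else xc x q.

Definition chain_order_polytope (d : Order.disp_t) (P : finPOrderType d)
    (A U1 U2 : {set P}) (lambda : P -> nat) (R : numDomainType)
    (x : {ffun coordT A -> R}) : Prop :=
  let lt := fun u v : P => (u < v)%O in
  (
      forall p a, p \in U1 -> a \in A -> lt p a -> xc x p <= (lambda a)%:R) /\
      (
      forall q b, q \in U1 -> b \in A -> lt b q -> (lambda b)%:R <= xc x q) /\
      (
      forall p q, p \in U1 -> q \in U1 -> lt p q -> xc x p <= xc x q) /\
      (
      forall p, p \in U2 -> 0 <= xc x p) /\
      (      (* (v) chains b < p_n < ... < p_1 < a, n >= 1, a,b in A ∪ U1, p_i in U2;
         s = [:: p_n; ...; p_1] *)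
      forall (a b : P) (s : seq P),
        a \in A :|: U1 -> b \in A :|: U1 -> s != [::] ->
        all (fun p => p \in U2) s -> path lt b s -> lt (last b s) a ->
        \sum_(p <- s) xc x p <= lamx lambda x a - lamx lambda x b) /\
      (      (* (vi) chains p_1 < ... < p_s < q, s >= 1, q in U1, p_i in U2;
         written p :: s' = [:: p_1; ...; p_s] *)
      forall (q p : P) (s' : seq P),
        q \in U1 -> all (fun r => r \in U2) (p :: s') ->
        path lt p s' -> lt (last p s') q ->
        \sum_(r <- p :: s') xc x r <= xc x q).

(* Main.v *)
Require Import Defs.
From HB Require Import structures.
From mathcomp Require Import all_boot all_order all_algebra.
From mathcomp Require Import ring lra zify.
From Stdlib Require Import ClassicalEpsilon.
Set Implicit Arguments. Unset Strict Implicit. Unset Printing Implicit Defensive.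
Import Order.TTheory GRing.Theory Num.Theory.
Local Open Scope ring_scope.

Section BigMax.
Variables (R : realFieldType) (J : finType) (Q : pred J) (F : J -> R).
Local Notation M := (\big[Num.max/0]_(j | Q j) F j).

Lemma bmax_ge j : Q j -> F j <= M.
Proof. by move=> Hj; rewrite (bigD1 j) //= le_max lexx. Qed.

Lemma bmax_ge0 : 0 <= M.
Proof. by apply: (big_rec (fun v => 0 <= v)) => // i v _ Hv; rewrite le_max Hv orbT. Qed.

Lemma bmax_le B : 0 <= B -> (forall j, Q j -> F j <= B) -> M <= B.
Proof. move=> HB H; apply: (big_ind (fun v => v <= B)) => //.
  by move=> u v Hu Hv; rewrite ge_max Hu Hv.
Qed.

Lemma bmax_attain : (exists j, Q j) -> (forall j, Q j -> 0 <= F j) ->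
  exists2 j, Q j & M = F j.
Proof.
move=> [j0 Hj0] H0.
have : M = 0 \/ exists2 j, Q j & M = F j.
  apply: (big_ind (fun v => v = 0 \/ exists2 j, Q j & v = F j)); first by left.
  - move=> u v [->|[j Hj ->]] [->|[k Hk ->]].
    + by left; rewrite maxxx.
    + by right; exists k => //; rewrite max_r ?H0.
    + by right; exists j => //; rewrite max_l ?H0.
    + rewrite /Num.max; case: ifP => _; right; [exists k|exists j] => //.
  - by move=> j Hj; right; exists j.
case=> // HM; exists j0 => //; apply/eqP; rewrite eq_le bmax_ge // andbT.
by rewrite HM H0.
Qed.
End BigMax.

Section Main.
Variables (R : realFieldType) (d : Order.disp_t) (P : finPOrderType d)
    (A U1 U2 : {set P}) (lambda : P -> nat).
Hypotheses (HA : marked_set A) (Hdec : decomposition A U1 U2) (Hadm : admissible U1 U2).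

Local Notation I := (coordT A).
Local Notation CO := (@chain_order_polytope d P A U1 U2 lambda R).

Lemma U1nA p : p \in U1 -> p \notin A.
Proof. case: Hdec => _ H => Hp; have : p \in U1 :|: U2 by rewrite inE Hp.
by rewrite H inE. Qed.
Lemma U2nA p : p \in U2 -> p \notin A.
Proof. case: Hdec => _ H => Hp; have : p \in U1 :|: U2 by rewrite inE Hp orbT.
by rewrite H inE. Qed.
Lemma U12 p : p \in U1 -> p \notin U2.
Proof. case: Hdec => /disjoint_setI0 H _ Hp; apply/negP => Hp2.
have : p \in U1 :&: U2 by rewrite inE Hp Hp2. by rewrite H inE. Qed.
Lemma nA_U p : p \notin A -> (p \in U1) || (p \in U2).
Proof. case: Hdec => _ H Hp; have : p \in ~: A by rewrite inE.
by rewrite -H inE. Qed.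

Lemma xc_val (x : {ffun I -> R}) (i : I) : xc x (val i) = x i.
Proof. by rewrite /xc valK. Qed.

Lemma xc_notA (x : {ffun I -> R}) p (Hp : p \notin A) :
  xc x p = x (Sub p Hp : I).
Proof. by rewrite -[in LHS](@SubK _ _ I p Hp) xc_val. Qed.

Lemma rank_lt (p q : P) : (p < q)%O ->
  (#|[set r | (r < p)%O]| < #|[set r | (r < q)%O]|)%N.
Proof.
move=> Hpq; apply: proper_card; apply/properP; split.
  by apply/subsetP => r; rewrite !inE => H; exact: lt_trans H Hpq.
by exists p; rewrite !inE ?ltxx.
Qed.

Lemma ex_min_below (p : P) : (exists q, (q < p)%O) ->
  exists b, (b < p)%O /\ forall r, ~~ (r < b)%O.
Proof.
move: {2}#|_| (leqnn #|[set r | (r < p)%O]|) => n.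
elim: n p => [|n IH] p Hn [q Hq].
  have : q \in [set r | (r < p)%O] by rewrite inE.
  by move: Hn; rewrite leqn0 cards_eq0 => /eqP ->; rewrite inE.
case: (boolP [exists r, (r < q)%O]).
  move/existsP => [r Hr].
  have Hc : (#|[set r | (r < q)%O]| <= n)%N.
    by rewrite -ltnS; apply: leq_trans Hn; exact: rank_lt.
  case: (IH q Hc (ex_intro _ r Hr)) => b [Hb1 Hb2].
  by exists b; split => //; exact: lt_trans Hb1 Hq.
move/existsPn => H; exists q; split => // r; exact: H.
Qed.

Lemma ex_max_above (p : P) : (exists q, (p < q)%O) ->
  exists a, (p < a)%O /\ forall r, ~~ (a < r)%O.
Proof.
move: {2}#|_| (leqnn #|[set r | (p < r)%O]|) => n.
elim: n p => [|n IH] p Hn [q Hq].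
  have : q \in [set r | (p < r)%O] by rewrite inE.
  by move: Hn; rewrite leqn0 cards_eq0 => /eqP ->; rewrite inE.
case: (boolP [exists r, (q < r)%O]).
  move/existsP => [r Hr].
  have Hc : (#|[set r | (q < r)%O]| <= n)%N.
    rewrite -ltnS; apply: leq_trans Hn; apply: proper_card; apply/properP; split.
      by apply/subsetP => t; rewrite !inE => H; exact: lt_trans Hq H.
    by exists q; rewrite !inE ?ltxx.
  case: (IH q Hc (ex_intro _ r Hr)) => a [Ha1 Ha2].
  by exists a; split => //; exact: lt_trans Hq Ha1.
move/existsPn => H; exists q; split => // r; exact: H.
Qed.

Lemma below_A (p : P) : p \notin A -> exists2 b, b \in A & (b < p)%O.
Proof.
move=> Hp; case: (boolP [exists q, (q < p)%O]).
  move/existsP => [q Hq]; case: (ex_min_below (ex_intro _ q Hq)) => b [Hb1 Hb2].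
  by exists b => //; apply: HA; left.
move/existsPn => H; by move: Hp; rewrite HA //; left.
Qed.

Lemma above_A (p : P) : p \notin A -> exists2 a, a \in A & (p < a)%O.
Proof.
move=> Hp; case: (boolP [exists q, (p < q)%O]).
  move/existsP => [q Hq]; case: (ex_max_above (ex_intro _ q Hq)) => a [Ha1 Ha2].
  by exists a => //; apply: HA; right.
move/existsPn => H; by move: Hp; rewrite HA //; right.
Qed.


Definition Good (c : P -> P) (w : P -> R) :=
  [/\ forall a, a \in A -> w a = (lambda a)%:R,
      forall p, 0 <= w p,
      forall p q, (p < q)%O -> (p \notin A) || (q \notin A) -> w p <= w q &
      forall p, p \in U2 -> [/\ (c p < p)%O, c p \in A :|: U2 &
          forall q, (q < p)%O -> q \in A :|: U2 -> w q <= w (c p)]].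

Definition psi (c : P -> P) (w : P -> R) : {ffun I -> R} :=
  [ffun i => if val i \in U2 then w (val i) - w (c (val i)) else w (val i)].

Lemma xc_psi c w p : p \notin A ->
  xc (psi c w) p = if p \in U2 then w p - w (c p) else w p.
Proof. by move=> Hp; rewrite (xc_notA _ Hp) ffunE /=. Qed.

Lemma lamx_psi c w q : Good c w -> q \in A :|: U1 ->
  lamx lambda (psi c w) q = w q.
Proof.
case=> GA _ _ _; rewrite /lamx inE; case: ifP => [/GA -> //|HqA /= Hq1].
by rewrite xc_psi ?HqA // (negbTE (U12 Hq1)).
Qed.

Lemma tele c w b s : Good c w -> b \in A :|: U2 -> all (fun p => p \in U2) s ->
  path (fun u v : P => (u < v)%O) b s ->
  \sum_(p <- s) xc (psi c w) p <= w (last b s) - w b.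
Proof.
move=> G; case: (G) => _ _ _ Gc.
elim: s b => [|p s IH] b Hb /=; first by rewrite big_nil subrr.
move=> /andP [Hp Hs] /andP [Hbp Hpath].
rewrite big_cons xc_psi ?U2nA // Hp.
have Hp' : p \in A :|: U2 by rewrite inE Hp orbT.
have H1 := IH p Hp' Hs Hpath.
case: (Gc p Hp) => _ _ /(_ b Hbp Hb) H2.
lra.
Qed.

Lemma Good_cp_ge0 c w p : Good c w -> 0 <= w (c p).
Proof. by case=> _ G0 _ _. Qed.

Lemma psi_CO c w : Good c w -> CO (psi c w).
Proof.
move=> G; case: (G) => GA G0 Gm Gc.
have xU1 p : p \in U1 -> xc (psi c w) p = w p.
  by move=> Hp; rewrite xc_psi ?U1nA // (negbTE (U12 Hp)).
split; [|split; [|split; [|split; [|split]]]].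
- move=> p a Hp Ha Hpa; rewrite xU1 // -GA //; apply: Gm => //.
  by rewrite U1nA.
- move=> q b Hq Hb Hbq; rewrite xU1 // -GA //; apply: Gm => //.
  by rewrite (U1nA Hq) orbT.
- move=> p q Hp Hq Hpq; rewrite !xU1 //; apply: Gm => //; by rewrite U1nA.
- move=> p Hp; rewrite xc_psi ?U2nA // Hp subr_ge0.
  case: (Gc p Hp) => H1 _ _; apply: Gm => //; by rewrite (U2nA Hp) orbT.
- move=> a b s Ha Hb Hs0 Hs Hpath Hlast.
  case: s Hs0 Hs Hpath Hlast => [//|p s] _ Hs Hpath Hlast.
  have HbA : b \in A.
    move: Hb; rewrite inE => /orP [//|Hb1].
    move: Hpath => /= /andP [Hbp _]; move: Hs => /= /andP [Hp _].
    by move: (Hadm Hb1 Hp); rewrite Hbp.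
  have Hb2 : b \in A :|: U2 by rewrite inE HbA.
  have := tele G Hb2 Hs Hpath.
  have Hl : last b (p :: s) \in U2.
    by move: Hs => /allP; apply; rewrite /= mem_last.
  have Hm : w (last b (p :: s)) <= w a by apply: Gm => //; rewrite U2nA.
  rewrite !lamx_psi // ?inE ?HbA //.
  lra.
- move=> q p s Hq Hs Hpath Hlast.
  move: (Hs) => /= /andP [Hp Hs'].
  rewrite big_cons xc_psi ?U2nA // Hp.
  have Hp' : p \in A :|: U2 by rewrite inE Hp orbT.
  have := tele G Hp' Hs' Hpath.
  have Hl : last p s \in U2.
    by move: Hs => /allP; apply; rewrite /= mem_last.
  have Hm : w (last p s) <= w q by apply: Gm => //; rewrite U2nA.
  have H0 := G0 (c p).
  rewrite xU1 //; lra.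
Qed.


Section Phi.
Variable x : {ffun I -> R}.
Hypothesis Hx : CO x.

Lemma Hx1 p a : p \in U1 -> a \in A -> (p < a)%O -> xc x p <= (lambda a)%:R.
Proof. by case: Hx => H _; apply: H. Qed.
Lemma Hx2 q b : q \in U1 -> b \in A -> (b < q)%O -> (lambda b)%:R <= xc x q.
Proof. by case: Hx => _ [H _]; apply: H. Qed.
Lemma Hx3 p q : p \in U1 -> q \in U1 -> (p < q)%O -> xc x p <= xc x q.
Proof. by case: Hx => _ [_ [H _]]; apply: H. Qed.
Lemma Hx4 p : p \in U2 -> 0 <= xc x p.
Proof. by case: Hx => _ [_ [_ [H _]]]; apply: H. Qed.
Lemma Hx5 (a b : P) (s : seq P) :
  a \in A :|: U1 -> b \in A :|: U1 -> s != [::] ->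
  all (fun p => p \in U2) s -> path (fun u v : P => (u < v)%O) b s ->
  (last b s < a)%O ->
  \sum_(p <- s) xc x p <= lamx lambda x a - lamx lambda x b.
Proof. by case: Hx => _ [_ [_ [_ [H _]]]]; apply: H. Qed.

Definition validb (p : P) (bS : P * {set P}) : bool :=
 [&& bS.1 \in A, bS.2 \subset U2, p \in bS.2,
     [forall s in bS.2, (s <= p)%O] &
     [forall s in bS.2, (bS.1 < s)%O] &&
     [forall s in bS.2, [forall t in bS.2, (s <= t)%O || (t <= s)%O]]].
Definition vl (bS : P * {set P}) : R := (lambda bS.1)%:R + \sum_(s in bS.2) xc x s.
Definition wx (p : P) : R := if p \in A then (lambda p)%:R else
  if p \in U1 then xc x p else \big[Num.max/0]_(bS | validb p bS) vl bS.

Lemma vl_ge0 p bS : validb p bS -> 0 <= vl bS.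
Proof.
case/and5P => _ /subsetP HS _ _ _; rewrite /vl; apply: addr_ge0 => //.
by apply: sumr_ge0 => s /HS; exact: Hx4.
Qed.

Lemma wx_U2 p : p \in U2 -> wx p = \big[Num.max/0]_(bS | validb p bS) vl bS.
Proof. by move=> Hp; rewrite /wx (negbTE (U2nA Hp)); case: ifP => // /U12; rewrite Hp. Qed.

Lemma valid_single b p : b \in A -> (b < p)%O -> p \in U2 ->
  validb p (b, [set p]) /\ vl (b, [set p]) = (lambda b)%:R + xc x p.
Proof.
move=> Hb Hbp Hp; split; last by rewrite /vl /= big_set1.
apply/and5P; split => //=.
- by rewrite sub1set.
- by rewrite inE.
- by apply/forall_inP => s; rewrite inE => /eqP ->.
apply/andP; split.
- by apply/forall_inP => s; rewrite inE => /eqP ->.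
- by apply/forall_inP => s; rewrite inE => /eqP ->; apply/forall_inP => t;
    rewrite inE => /eqP ->; rewrite lexx.
Qed.

Lemma valid_ext p q b S : validb p (b, S) -> (p < q)%O -> q \in U2 ->
  validb q (b, S :|: [set q]) /\ vl (b, S :|: [set q]) = vl (b, S) + xc x q.
Proof.
case/and5P => /= Hb HS HpS /forall_inP Hle /andP [/forall_inP Hlt /forall_inP Hch] Hpq Hq.
have HqS : q \notin S.
  by apply/negP => /Hle; rewrite lt_geF.
have Hsq s : s \in S -> (s <= q)%O by move/Hle => H; exact: le_trans H (ltW Hpq).
split.
  apply/and5P; split => //=.
  - by rewrite subUset HS sub1set.
  - by rewrite !inE eqxx orbT.
  - apply/forall_inP => s; rewrite !inE => /orP [/Hsq //|/eqP ->]; exact: lexx.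
  apply/andP; split.
  - apply/forall_inP => s; rewrite !inE => /orP [/Hlt //|/eqP ->].
    exact: lt_trans (Hlt _ HpS) Hpq.
  - apply/forall_inP => s; rewrite !inE => /orP [Hs|/eqP ->];
      apply/forall_inP => t; rewrite !inE => /orP [Ht|/eqP ->].
    + by move/forall_inP: (Hch s Hs); apply.
    + by rewrite Hsq.
    + by rewrite Hsq ?orbT.
    + by rewrite lexx.
rewrite /vl /= (bigD1 q) ?inE ?eqxx ?orbT //=.
rewrite -addrA [xc x q + _]addrC; congr (_ + (_ + _)).
apply: eq_bigl => s; rewrite !inE; case: (eqVneq s q) => [->|] //=.
by rewrite (negbTE HqS).
by rewrite orbF andbT.
Qed.

Lemma wx_attain p : p \in U2 -> exists2 bS, validb p bS & wx p = vl bS.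
Proof.
move=> Hp; rewrite wx_U2 //; apply: bmax_attain; last by move=> bS; exact: vl_ge0.
case: (below_A (U2nA Hp)) => b Hb Hbp.
by exists (b, [set p]); case: (valid_single Hb Hbp Hp).
Qed.

Lemma wx_ge p bS : p \in U2 -> validb p bS -> vl bS <= wx p.
Proof. by move=> Hp HbS; rewrite wx_U2 //; apply: bmax_ge. Qed.

Lemma wx_lamx a : a \in A :|: U1 -> wx a = lamx lambda x a.
Proof. by rewrite /wx /lamx inE; case: ifP => //= _ ->. Qed.

Lemma valid_chain p b S a : validb p (b, S) -> a \in A :|: U1 -> (p < a)%O ->
  vl (b, S) <= lamx lambda x a.
Proof.
case/and5P => /= Hb HS HpS /forall_inP Hle /andP [/forall_inP Hlt /forall_inP Hch] Ha Hpa.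
set s := sort <=%O (enum S).
have Hmem r : (r \in s) = (r \in S) by rewrite mem_sort mem_enum.
have Hsum : \sum_(r <- s) xc x r = \sum_(r in S) xc x r.
  by rewrite (perm_big (enum S)) ?perm_sort // big_enum.
have Hsorted : sorted <=%O s.
  apply: (sort_sorted_in (P := mem S)).
    move=> u v Hu Hv; by move/forall_inP: (Hch u Hu); apply.
  by apply/allP => r; rewrite mem_enum.
have Hlts : sorted <%O s.
  by rewrite lt_sorted_uniq_le Hsorted sort_uniq enum_uniq.
have Hne : s != [::].
  by apply/eqP => Hs; move: (Hmem p); rewrite Hs HpS.
have Hall : all (fun r => r \in U2) s.
  by apply/allP => r; rewrite Hmem => /(subsetP HS).
have Hpath : path (fun u v : P => (u < v)%O) b s.
  case Es : s Hne Hlts => [//|h t] _ /= Ht.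
  rewrite Ht andbT; apply: Hlt; by rewrite -Hmem Es inE eqxx.
have Hlast : (last b s < a)%O.
  apply: le_lt_trans Hpa; apply: Hle; rewrite -Hmem.
  by case Es : s Hne => [//|h t] _ /=; rewrite mem_last.
have Hb' : b \in A :|: U1 by rewrite inE Hb.
have := Hx5 Ha Hb' Hne Hall Hpath Hlast.
by rewrite Hsum /vl /= {2}/lamx Hb; lra.
Qed.

Definition cx (p : P) : P := odflt p [pick q | [&& (q < p)%O, q \in A :|: U2 &
   [forall q', ((q' < p)%O && (q' \in A :|: U2)) ==> (wx q' <= wx q)]]].

Lemma cx_spec p : p \in U2 -> [/\ (cx p < p)%O, cx p \in A :|: U2 &
   forall q, (q < p)%O -> q \in A :|: U2 -> wx q <= wx (cx p)].
Proof.
move=> Hp; rewrite /cx; case: pickP => [q /and3P [H1 H2 /forallP H3]|Hn] /=.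
  split => // q' Hq' Hq'2; by move: (H3 q'); rewrite Hq' Hq'2.
exfalso; case: (below_A (U2nA Hp)) => b Hb Hbp.
have Hb' : b \in [pred q | (q < p)%O && (q \in A :|: U2)] by rewrite inE /= Hbp inE Hb.
case: (@arg_maxP _ _ _ b [pred q | (q < p)%O && (q \in A :|: U2)] wx Hb') => q.
rewrite inE /= => /andP [Hq1 Hq2] Hmax.
move: (Hn q); rewrite Hq1 Hq2 /=; move/negbT/negP; apply.
apply/forallP => q'; apply/implyP => /andP [H1 H2]; apply: Hmax; rewrite inE /= H1 /=; by rewrite inE in H2.
Qed.

Lemma wx_ge0 p : 0 <= wx p.
Proof.
rewrite /wx; case: ifP => HpA; first exact: ler0n.
case: ifP => Hp1; last exact: bmax_ge0.
case: (below_A (negbT HpA)) => b Hb Hbp.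
exact: le_trans (ler0n _ _) (Hx2 Hp1 Hb Hbp).
Qed.

Lemma wx_mono p q : (p < q)%O -> (p \notin A) || (q \notin A) -> wx p <= wx q.
Proof.
move=> Hpq Hn.
have wxA a : a \in A -> wx a = (lambda a)%:R by rewrite /wx => ->.
have wx1 a : a \in U1 -> wx a = xc x a.
  by move=> Ha; rewrite /wx (negbTE (U1nA Ha)) Ha.
case: (boolP (p \in A)) => HpA.
  have HqA : q \notin A by move: Hn; rewrite HpA.
  case/orP: (nA_U HqA) => Hq.
    by rewrite wxA // wx1 //; apply: Hx2.
  case: (valid_single HpA Hpq Hq) => Hv Hvl.
  rewrite wxA //; apply: le_trans (wx_ge Hq Hv); rewrite Hvl.
  have := Hx4 Hq; lra.
case/orP: (nA_U HpA) => Hp.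
  case: (boolP (q \in A)) => HqA; first by rewrite wx1 // wxA //; apply: Hx1.
  case/orP: (nA_U HqA) => Hq; first by rewrite !wx1 //; apply: Hx3.
  by move: (Hadm Hp Hq); rewrite Hpq.
case: (boolP (q \in U2)) => Hq.
  rewrite wx_U2 //; apply: bmax_le; first exact: wx_ge0.
  move=> [b S] Hv; case: (valid_ext Hv Hpq Hq) => Hv' Hvl'.
  apply: le_trans (wx_ge Hq Hv'); rewrite Hvl'; have := Hx4 Hq; lra.
have Hq' : q \in A :|: U1.
  rewrite inE; case: (boolP (q \in A)) => //= HqA.
  by case/orP: (nA_U HqA) => // Hq2; move: Hq; rewrite Hq2.
case: (wx_attain Hp) => [[b S] Hv ->].
rewrite wx_lamx //; exact: valid_chain Hv Hq' Hpq.
Qed.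

Lemma wx_rec p : p \in U2 -> wx p = wx (cx p) + xc x p.
Proof.
move=> Hp; case: (cx_spec Hp) => Hc1 Hc2 Hc3.
apply/eqP; rewrite eq_le; apply/andP; split.
  case: (wx_attain Hp) => [[b S] Hv ->].
  move: (Hv) => /and5P [/= Hb HS HpS /forall_inP Hle /andP [/forall_inP Hlt /forall_inP Hch]].
  have Hsplit : vl (b, S) = vl (b, S :\ p) + xc x p.
    rewrite /vl /= (bigD1 p) //= -addrA [xc x p + _]addrC; congr (_ + (_ + _)).
    by apply: eq_bigl => s; rewrite !inE andbC.
  rewrite Hsplit lerD2r.
  case: (set_0Vmem (S :\ p)) => [HS0|[q0 Hq0]].
    rewrite /vl /= HS0 big_set0 addr0.
    have HbA : b \in A :|: U2 by rewrite inE Hb.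
    have := Hc3 b (Hlt p HpS) HbA; rewrite /wx Hb; by [].
  case: (@arg_maxP _ _ _ q0 (mem (S :\ p)) (fun r => #|[set t | (t < r)%O]|) Hq0) => q Hq0' Hmax.
  have Hq : q \in S :\ p := Hq0'.
  have HqS : q \in S by move: Hq; rewrite inE => /andP [].
  have Hqp : q != p by move: Hq; rewrite in_setD1 => /andP [H _].
  have HqU2 : q \in U2 by apply: (subsetP HS).
  have Hrq r : r \in S :\ p -> (r <= q)%O.
    move=> Hr; have HrS : r \in S by move: Hr; rewrite inE => /andP [].
    move/forall_inP: (Hch r HrS) => /(_ q HqS) /orP [//|Hqr].
    case: (eqVneq q r) => [->//|Hne].
    have Hlt' : (q < r)%O by rewrite lt_neqAle Hne Hqr.
    by move: (Hmax r Hr) => /=; rewrite leEnat leqNgt rank_lt.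
  have Hvq : validb q (b, S :\ p).
    apply/and5P; split => //=.
    - by apply: subset_trans HS; apply: subsetDl.
    - by apply/forall_inP.
    apply/andP; split; apply/forall_inP => r Hr; have HrS : r \in S by move: Hr; rewrite inE => /andP [].
      exact: Hlt.
    apply/forall_inP => t Ht; have HtS : t \in S by move: Ht; rewrite inE => /andP [].
    by move/forall_inP: (Hch r HrS); apply.
  have Hqlt : (q < p)%O by rewrite lt_neqAle Hqp Hle.
  apply: le_trans (wx_ge HqU2 Hvq) _; apply: Hc3 => //; by rewrite inE HqU2 orbT.
move: Hc2; rewrite inE => /orP [HcA|HcU2].
  case: (valid_single HcA Hc1 Hp) => Hv Hvl.
  by rewrite {1}/wx HcA -Hvl; apply: wx_ge.
case: (wx_attain HcU2) => [[b S] Hv ->].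
case: (valid_ext Hv Hc1 Hp) => Hv' <-; exact: wx_ge.
Qed.

Lemma Good_wx : Good cx wx.
Proof.
split.
- by move=> a Ha; rewrite /wx Ha.
- exact: wx_ge0.
- exact: wx_mono.
- exact: cx_spec.
Qed.

Lemma psi_wx : psi cx wx = x.
Proof.
apply/ffunP => i; rewrite ffunE -xc_val.
have Hi : val i \notin A := valP i.
case: ifP => Hp; first by rewrite wx_rec //; lra.
case/orP: (nA_U Hi) => Hp1; last by move: Hp; rewrite Hp1.
by rewrite /wx (negbTE Hi) Hp1.
Qed.

Lemma wx_form p : exists k : nat, exists S : {set P},
  S \subset ~: A /\ wx p = k%:R + \sum_(s in S) xc x s.
Proof.
case: (boolP (p \in A)) => HpA.
  by exists (lambda p), set0; rewrite sub0set big_set0 addr0 /wx HpA.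
case: (boolP (p \in U1)) => Hp1.
  exists 0%N, [set p]; rewrite sub1set inE HpA big_set1 add0r /wx.
  by rewrite (negbTE HpA) Hp1.
have Hp2 : p \in U2 by case/orP: (nA_U HpA) => //; rewrite (negbTE Hp1).
case: (wx_attain Hp2) => [[b S] Hv ->]; exists (lambda b), S; split => //.
move: Hv => /and5P [_ HS _ _ _]; apply: subset_trans HS _.
by apply/subsetP => r /U2nA; rewrite inE.
Qed.

End Phi.


Definition Lam : nat := \max_(a in A) lambda a.

Lemma lam_le a : a \in A -> (lambda a <= Lam)%N.
Proof. by move=> Ha; apply: leq_bigmax_cond. Qed.

Lemma Good_le c w p : Good c w -> w p <= Lam%:R.
Proof.
case=> GA _ Gm _; case: (boolP (p \in A)) => Hp.
  by rewrite GA // ler_nat lam_le.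
case: (above_A Hp) => a Ha Hpa.
have Hn : (p \notin A) || (a \notin A) by rewrite Hp.
apply: le_trans (Gm p a Hpa Hn) _; by rewrite GA // ler_nat lam_le.
Qed.

Definition isnat (v : R) : bool := [exists m : 'I_Lam.+1, v == (m : nat)%:R].

Lemma isnatP v : isnat v -> exists m : nat, v = m%:R.
Proof. by case/existsP => m /eqP ->; exists m. Qed.

Lemma isnat_nat m : (m <= Lam)%N -> isnat m%:R.
Proof. by move=> Hm; apply/existsP; exists (@Ordinal Lam.+1 m Hm). Qed.

Lemma between K (v : R) : 0 <= v -> v <= K%:R -> (forall m, (m <= K)%N -> v != m%:R) ->
  exists k, [/\ (k < K)%N, k%:R < v & v < k.+1%:R].
Proof.
elim: K v => [|K IH] v H0 HK Hn.
  by move: (Hn 0%N (leqnn 0)); rewrite eq_le H0 HK.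
case: (lerP v K%:R) => Hv.
  case: (IH v H0 Hv) => [m Hm|k [Hk H1 H2]]; first by apply: Hn; rewrite (leq_trans Hm).
  by exists k; split => //; rewrite ltnS ltnW.
exists K; split => //; rewrite lt_neqAle HK andbT; exact: Hn.
Qed.

Inductive inconv (T : {ffun I -> R} -> Prop) : {ffun I -> R} -> Prop :=
| inc_base z : T z -> inconv T z
| inc_comb y z t : 0 <= t -> t <= 1 -> inconv T y -> inconv T z ->
    inconv T [ffun i => t * y i + (1 - t) * z i].

Lemma psi_lattice c w : (forall p, exists m : nat, w p = m%:R) -> lattice_point (psi c w).
Proof.
move=> Hn i; rewrite ffunE; case: ifP => _.
  case: (Hn (val i)) => m1 ->; case: (Hn (c (val i))) => m2 ->.
  by exists (m1%:Z - m2%:Z); rewrite intrB -!pmulrn.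
by case: (Hn (val i)) => m1 ->; exists m1%:Z; rewrite -pmulrn.
Qed.

Definition inb (k : nat) (v : R) := (k%:R < v) && (v < k.+1%:R).
Definition gsh (k : nat) (s v : R) := if inb k v then v + s else v.

Lemma inb_nat k m : ~~ inb k m%:R.
Proof. by rewrite /inb !ltr_nat; apply/negP => /andP [H1 H2]; lia. Qed.

Lemma gsh_nat k s m : gsh k s m%:R = m%:R.
Proof. by rewrite /gsh (negbTE (inb_nat k m)). Qed.

Lemma gsh_mono k s v v' : (inb k v -> k%:R <= v + s) -> (inb k v -> v + s <= k.+1%:R) ->
  (inb k v' -> k%:R <= v' + s) -> (inb k v' -> v' + s <= k.+1%:R) ->
  v <= v' -> gsh k s v <= gsh k s v'.
Proof.
move=> H1 H2 H3 H4 Hvv; rewrite /gsh.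
case: (boolP (inb k v)) => Hv; case: (boolP (inb k v')) => Hv'.
- by rewrite lerD2r.
- have := H2 Hv; move: Hv Hv'; rewrite /inb => /andP [Ha Hb].
  by rewrite negb_and -!leNgt => /orP [Hc|Hc]; lra.
- have := H3 Hv'; move: Hv Hv'; rewrite /inb => Hn /andP [Ha Hb]; move: Hn.
  by rewrite negb_and -!leNgt => /orP [Hc|Hc]; lra.
- done.
Qed.

Lemma Good_gsh c w k s : Good c w ->
  (forall q, inb k (w q) -> k%:R <= w q + s /\ w q + s <= k.+1%:R) ->
  Good c (fun p => gsh k s (w p)).
Proof.
case=> GA G0 Gm Gc Hs.
have Hmono v v' : v <= v' -> (v = 0 \/ exists q, v = w q) -> (exists q, v' = w q) ->
    gsh k s v <= gsh k s v'.
  move=> Hvv Hv [q' Eq]; rewrite Eq in Hvv *; apply: gsh_mono => //.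
  - case: Hv => [->|[q ->]]; last by case/Hs.
    by move=> H; move: (inb_nat k 0); rewrite H.
  - case: Hv => [->|[q ->]]; last by case/Hs.
    by move=> H; move: (inb_nat k 0); rewrite H.
  - by case/Hs.
  - by case/Hs.
split.
- by move=> a Ha; rewrite GA // gsh_nat.
- move=> p; have E : gsh k s 0 = 0 := gsh_nat k s 0.
  rewrite -{1}E; apply: Hmono => //; [by left|by exists p].
- move=> p q Hpq Hn; apply: Hmono; [exact: Gm|right; by exists p|by exists q].
- move=> p Hp; case: (Gc p Hp) => H1 H2 H3; split => // q Hq Hq2.
  apply: Hmono; [exact: H3|right; by exists q|by exists (c p)].
Qed.

Lemma all_nat_case c w : Good c w -> (forall p, isnat (w p)) ->
  inconv (fun z => CO z /\ lattice_point z) (psi c w).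
Proof.
move=> G Hn; apply: inc_base; split; first exact: psi_CO.
by apply: psi_lattice => p; apply: isnatP.
Qed.

Lemma lat_ind c w : Good c w -> inconv (fun z => CO z /\ lattice_point z) (psi c w).
Proof.
move: {2}#|_| (leqnn #|[set p | ~~ isnat (w p)]|) => n.
elim: n w => [|n IH] w Hn G.
  apply: all_nat_case => // p; case: (boolP (isnat (w p))) => // Hp.
  have : p \in [set p | ~~ isnat (w p)] by rewrite inE.
  by move: Hn; rewrite leqn0 cards_eq0 => /eqP ->; rewrite inE.
case: (boolP [exists p, ~~ isnat (w p)]); last first.
  by move/existsPn => H; apply: all_nat_case => // p; move: (H p); rewrite negbK.
move/existsP => [p0 Hp0].
have Hb0 : 0 <= w p0 by case: G.
have HbL := Good_le p0 G.
have : forall m, (m <= Lam)%N -> w p0 != m%:R.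
  move=> m Hm; apply/eqP => He; move: Hp0; by rewrite He isnat_nat.
case/(between Hb0 HbL) => k [HkL Hk1 Hk2].
have Hp0in : p0 \in [pred q | inb k (w q)] by rewrite inE /= /inb Hk1 Hk2.
case: (@arg_minP _ _ _ p0 [pred q | inb k (w q)] w Hp0in) => mq.
rewrite inE /= => Hmq Hmin.
case: (@arg_maxP _ _ _ p0 [pred q | inb k (w q)] w Hp0in) => Mq.
rewrite inE /= => HMq Hmax.
set s1 := k%:R - w mq; set s2 := k.+1%:R - w Mq.
have Hinb q : inb k (w q) -> [/\ k%:R < w q, w q < k.+1%:R, w mq <= w q & w q <= w Mq].
  move=> Hq; move: (Hq); rewrite /inb => /andP [Ha Hb]; split => //.
    by apply: Hmin.
  by apply: Hmax.
have Hm' := Hinb mq Hmq; have HM' := Hinb Mq HMq.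
case: Hm' => Hm1 Hm2 _ _; case: HM' => HM1 HM2 _ _.
have Hs1 : s1 < 0 by rewrite /s1; lra.
have Hs2 : 0 < s2 by rewrite /s2; lra.
have G1 : Good c (fun p => gsh k s1 (w p)).
  apply: Good_gsh => // q /Hinb [Ha Hb Hc Hd]; rewrite /s1; split; lra.
have G2 : Good c (fun p => gsh k s2 (w p)).
  apply: Good_gsh => // q /Hinb [Ha Hb Hc Hd]; rewrite /s2; split; lra.
have Hsub s : [set p | ~~ isnat (gsh k s (w p))] \subset [set p | ~~ isnat (w p)].
  apply/subsetP => p; rewrite !inE; apply: contra => Hp.
  by case/isnatP: (Hp) => m Hm; rewrite Hm gsh_nat -Hm.
have Hcard s q : inb k (w q) -> isnat (gsh k s (w q)) ->
    (#|[set p | ~~ isnat (gsh k s (w p))]| <= n)%N.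
  move=> Hq Hnat; rewrite -ltnS; apply: leq_trans Hn; apply: proper_card.
  apply/properP; split; first by apply: Hsub.
  exists q; rewrite !inE ?Hnat //=.
  by apply/negP => /isnatP [m Hm]; move: (inb_nat k m); rewrite -Hm Hq.
have Hnat1 : isnat (gsh k s1 (w mq)).
  by rewrite /gsh Hmq /s1 addrC subrK isnat_nat // ltnW.
have Hnat2 : isnat (gsh k s2 (w Mq)).
  by rewrite /gsh HMq /s2 addrC subrK isnat_nat.
have IH1 := IH _ (Hcard _ _ Hmq Hnat1) G1.
have IH2 := IH _ (Hcard _ _ HMq Hnat2) G2.
set t := s2 / (s2 - s1).
have Ht0 : t * s1 + (1 - t) * s2 = 0 by rewrite /t; field; lra.
have Hcomb p : t * gsh k s1 (w p) + (1 - t) * gsh k s2 (w p) = w p.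
  rewrite /gsh; case: ifP => _; last by ring.
  have E : t * (w p + s1) + (1 - t) * (w p + s2) = w p + (t * s1 + (1 - t) * s2) by ring.
  by rewrite E Ht0 addr0.
have Htge : 0 <= t by rewrite /t divr_ge0 //; lra.
have Htle : t <= 1 by rewrite /t ler_pdivrMr ?mul1r; lra.
have -> : psi c w = [ffun i => t * psi c (fun p => gsh k s1 (w p)) i +
                              (1 - t) * psi c (fun p => gsh k s2 (w p)) i].
  apply/ffunP => i; rewrite !ffunE; case: ifP => _; last by rewrite Hcomb.
  set a1 := gsh k s1 _; set a2 := gsh k s2 _; set b1 := gsh k s1 _; set b2 := gsh k s2 _.
  have E : t * (a1 - b1) + (1 - t) * (a2 - b2) = (t * a1 + (1 - t) * a2) - (t * b1 + (1 - t) * b2) by ring.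
  by rewrite E /a1 /a2 /b1 /b2 !Hcomb.
exact: inc_comb.
Qed.


Section Conv.
Variables (n : nat) (c : 'I_n -> R) (v : 'I_n -> {ffun I -> R}).
Hypotheses (Hc0 : forall k, 0 <= c k) (Hc1 : \sum_k c k = 1) (Hv : forall k, CO (v k)).
Let y := \sum_k [ffun i => c k * v k i].
Let aff (F : {ffun I -> R} -> R) := F y = \sum_k c k * F (v k).

Lemma aff_xc p : aff (fun z => xc z p).
Proof.
rewrite /aff /xc; case: (insub p) => [i|].
  by rewrite /y sum_ffunE; apply: eq_bigr => k _; rewrite ffunE.
by rewrite big1 // => k _; rewrite mulr0.
Qed.

Lemma aff_const r : aff (fun _ => r).
Proof. by rewrite /aff -mulr_suml Hc1 mul1r. Qed.

Lemma aff_add F G : aff F -> aff G -> aff (fun z => F z + G z).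
Proof. by rewrite /aff => -> ->; rewrite -big_split; apply: eq_bigr => k _; rewrite mulrDr. Qed.

Lemma aff_sub F G : aff F -> aff G -> aff (fun z => F z - G z).
Proof. by rewrite /aff => -> ->; rewrite -sumrB; apply: eq_bigr => k _; rewrite mulrBr. Qed.

Lemma aff_seq (s : seq P) : aff (fun z => \sum_(p <- s) xc z p).
Proof.
elim: s => [|p s IH].
  by rewrite /aff big_nil big1 // => k _; rewrite big_nil mulr0.
rewrite /aff big_cons (aff_xc p) IH -big_split; apply: eq_bigr => k _.
by rewrite big_cons mulrDr.
Qed.

Lemma aff_lamx a : aff (fun z => lamx lambda z a).
Proof. rewrite /aff /lamx; case: (a \in A); [exact: aff_const|exact: aff_xc]. Qed.

Lemma aff_le F G : aff F -> aff G -> (forall k, F (v k) <= G (v k)) -> F y <= G y.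
Proof.
move=> -> -> H; apply: ler_sum => k _; by apply: ler_wpM2l.
Qed.

Lemma CO_convex : CO y.
Proof.
split; [|split; [|split; [|split; [|split]]]].
- move=> p a Hp Ha Hpa; apply: (aff_le (aff_xc p) (aff_const _)) => k.
  by case: (Hv k) => H _; apply: H.
- move=> q b Hq Hb Hbq; apply: (aff_le (aff_const _) (aff_xc q)) => k.
  by case: (Hv k) => _ [H _]; apply: H.
- move=> p q Hp Hq Hpq; apply: (aff_le (aff_xc p) (aff_xc q)) => k.
  by case: (Hv k) => _ [_ [H _]]; apply: H.
- move=> p Hp; apply: (aff_le (aff_const 0) (aff_xc p)) => k.
  by case: (Hv k) => _ [_ [_ [H _]]]; apply: H.
- move=> a b s Ha Hb Hs0 Hs Hpath Hl.
  apply: (aff_le (aff_seq s) (aff_sub (aff_lamx a) (aff_lamx b))) => k.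
  by case: (Hv k) => _ [_ [_ [_ [H _]]]]; apply: H.
- move=> q p s Hq Hs Hpath Hl.
  apply: (aff_le (aff_seq (p :: s)) (aff_xc q)) => k.
  by case: (Hv k) => _ [_ [_ [_ [_ H]]]]; apply: H.
Qed.
End Conv.

Lemma inconv_hull (T : {ffun I -> R} -> Prop) (S : seq {ffun I -> R}) y :
  (forall z, T z -> z \in S) -> inconv T y -> conv_hull S y.
Proof.
move=> HS; elim => {y} [z Tz|y z t Ht0 Ht1 _ [c1 [Hc10 Hc11 Ey]] _ [c2 [Hc20 Hc21 Ez]]].
  have Hidx : (index z S < size S)%N by rewrite index_mem HS.
  set k0 := Ordinal Hidx.
  have Hk (k : 'I_(size S)) : k != k0 -> (val k == index z S) = false.
    by move=> Hk; apply/negP => /eqP E; move: Hk; rewrite -val_eqE /= E eqxx.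
  exists (fun k : 'I_(size S) => if val k == index z S then 1 else 0); split.
  - by move=> k; case: ifP.
  - rewrite (bigD1 k0) //= eqxx big1 ?addr0 // => k /Hk ->; done.
  - apply/ffunP => i; rewrite sum_ffunE (bigD1 k0) //= ffunE eqxx mul1r nth_index ?HS //.
    by rewrite big1 ?addr0 // => k /Hk; rewrite ffunE => ->; rewrite mul0r.
exists (fun k => t * c1 k + (1 - t) * c2 k); split.
- move=> k; have H1 : 0 <= 1 - t by rewrite subr_ge0.
  by apply: addr_ge0; apply: mulr_ge0.
- rewrite big_split /= -!mulr_sumr Hc11 Hc21; ring.
- apply/ffunP => i; rewrite !ffunE Ey Ez !sum_ffunE !mulr_sumr -big_split.
  apply: eq_bigr => k _; rewrite !ffunE /=; ring.
Qed.


Lemma hermite (n m : nat) : (0 < n)%N -> (\sum_(k < n) ((m + k) %/ n))%N = m.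
Proof.
move=> Hn; elim: m => [|m IH].
  by rewrite big1 // => k _; rewrite add0n divn_small.
case: n Hn IH => [//|n'] _ IH.
rewrite big_ord_recl /= in IH; rewrite big_ord_recr /=.
have E : (\sum_(i < n') (m.+1 + i) %/ n'.+1 = \sum_(i < n') (m + bump 0 i) %/ n'.+1)%N.
  by apply: eq_bigr => i _; rewrite /bump /= add1n addSnnS.
rewrite E addn0 in IH *.
have E2 : (m.+1 + n')%N = (m + n'.+1)%N by rewrite addSnnS.
rewrite E2 divnDr ?dvdnn // divnn /=.
move: IH; set S := (\sum_(i < n') _)%N => IH. lia.
Qed.

Lemma int_nat (z : int) : 0 <= (z%:~R : R) -> exists m : nat, (z%:~R : R) = m%:R.
Proof.
case: z => m H; first by exists m; rewrite -pmulrn.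
by move: H; rewrite NegzE mulrNz oppr_ge0 -pmulrn => H; have := ltr0Sn R m; lra.
Qed.

Lemma sum_nat (J : finType) (Q : pred J) (F : J -> R) :
  (forall j, Q j -> exists m : nat, F j = m%:R) ->
  exists m : nat, \sum_(j | Q j) F j = m%:R.
Proof.
move=> H; apply: (big_rec (fun v => exists m : nat, v = m%:R)); first by exists 0%N.
move=> j v Hj [m ->]; case: (H j Hj) => m' ->; exists (m' + m)%N; by rewrite natrD.
Qed.

Lemma sum_int (J : finType) (F : J -> R) :
  (forall j, exists z : int, F j = z%:~R) -> exists z : int, \sum_j F j = z%:~R.
Proof.
move=> H; apply: (big_rec (fun v => exists z : int, v = z%:~R)); first by exists 0.
move=> j v _ [z ->]; case: (H j) => z' ->; exists (z' + z); by rewrite intrD.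
Qed.

Lemma xc_ge0 x p : CO x -> p \notin A -> 0 <= xc x p.
Proof.
move=> Hx Hp; case/orP: (nA_U Hp) => Hp'; last exact: (Hx4 Hx).
case: (below_A Hp) => b Hb Hbp; exact: le_trans (ler0n _ _) (Hx2 Hx Hp' Hb Hbp).
Qed.

Lemma normal_back (n : nat) (y x : {ffun I -> R}) : (0 < n)%N ->
  lattice_point y -> CO x -> y = [ffun i => n%:R * x i] ->
  exists xs : 'I_n -> {ffun I -> R},
    (forall k, lattice_point (xs k) /\ CO (xs k)) /\ y = \sum_k xs k.
Proof.
move=> Hn Hy Hx Ey.
set w := wx x; set c := cx x.
have G : Good c w := Good_wx Hx.
have Hpsi : psi c w = x := psi_wx Hx.
have Hnx p : p \notin A -> exists m : nat, n%:R * xc x p = m%:R.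
  move=> Hp; have Hyp : y (Sub p Hp : I) = n%:R * xc x p by rewrite Ey ffunE xc_notA.
  case: (Hy (Sub p Hp : I)) => z Hz; rewrite -Hyp Hz; apply: int_nat; rewrite -Hz Hyp.
  by apply: mulr_ge0 => //; apply: xc_ge0.
have Hw p : exists m : nat, n%:R * w p == m%:R.
  rewrite /w; case: (wx_form Hx p) => k [S [HS ->]].
  have [m Hm] : exists m : nat, n%:R * \sum_(s in S) xc x s = m%:R.
    rewrite mulr_sumr; apply: sum_nat => s Hs; apply: Hnx.
    by move: (subsetP HS s Hs); rewrite inE.
  by exists (n * k + m)%N; rewrite mulrDr Hm natrD natrM.
set mf := fun p => xchoose (Hw p).
have Hmf p : n%:R * w p = (mf p)%:R by apply/eqP; exact: (xchooseP (Hw p)).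
set wk := fun (k : 'I_n) p => (((mf p + k) %/ n)%N%:R : R).
have Hmono k p q : w p <= w q -> wk k p <= wk k q.
  move=> H; rewrite /wk ler_nat; apply: leq_div2r; rewrite leq_add2r -(ler_nat R) -!Hmf.
  by apply: ler_wpM2l.
have Gk k : Good c (wk k).
  case: G => GA G0 Gm Gc; split.
  - move=> a Ha; rewrite /wk.
    have Hm : mf a = (lambda a * n)%N.
      by apply/eqP; rewrite -(eqr_nat R) -Hmf GA // natrM mulrC.
    by rewrite Hm divnMDl // divn_small ?addn0.
  - by move=> p; rewrite /wk ler0n.
  - by move=> p q Hpq Hn'; apply: Hmono; apply: Gm.
  - move=> p Hp; case: (Gc p Hp) => H1 H2 H3; split => // q Hq Hq2.
    by apply: Hmono; apply: H3.
have Hsum p : \sum_(k < n) wk k p = n%:R * w p.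
  by rewrite /wk -natr_sum hermite // Hmf.
exists (fun k => psi c (wk k)); split.
  move=> k; split; last exact: psi_CO.
  by apply: psi_lattice => p; exists ((mf p + k) %/ n)%N.
apply/ffunP => i; rewrite sum_ffunE Ey ffunE -{1}Hpsi ffunE.
under eq_bigr do rewrite ffunE.
case: ifP => _; last by rewrite Hsum.
by rewrite sumrB !Hsum mulrBr.
Qed.

Definition pb (Q : Prop) : bool := if excluded_middle_informative Q then true else false.

Lemma pbP (Q : Prop) : pb Q = true <-> Q.
Proof. by rewrite /pb; case: excluded_middle_informative. Qed.

Lemma CO_bounds z : CO z -> forall i, 0 <= z i /\ z i <= Lam%:R.
Proof.
move=> Hz i; have G := Good_wx Hz; rewrite -(psi_wx Hz) ffunE.
have Hl p := Good_le p G.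
case: (G) => _ G0 Gm Gc.
case: ifP => Hi.
  case: (Gc _ Hi) => H1 _ _; split.
    rewrite subr_ge0; apply: Gm => //; by rewrite (U2nA Hi) orbT.
  have := Hl (val i); have := G0 (cx z (val i)); lra.
by split; [apply: G0|apply: Hl].
Qed.

Theorem main_thm : lattice_polytope CO /\ normal_polytope CO.
Proof.
set box := [seq [ffun i => ((nat_of_ord (f i))%:R : R)] | f : {ffun I -> 'I_Lam.+1} <- enum {ffun I -> 'I_Lam.+1}].
set S := [seq z <- box | pb (CO z)].
have HSCO z : z \in S -> CO z by rewrite mem_filter => /andP [/pbP].
have Hin z : CO z -> lattice_point z -> z \in S.
  move=> Hz Hlz; rewrite mem_filter; apply/andP; split; first by apply/pbP.
  have Hex i : exists m : 'I_Lam.+1, z i == (m : nat)%:R.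
    case: (CO_bounds Hz i) => H0 H1; case: (Hlz i) => zz Hzz.
    case: (@int_nat zz); first by rewrite -Hzz.
    move=> m Hm; rewrite Hzz Hm in H1; rewrite ler_nat in H1.
    by exists (@Ordinal Lam.+1 m H1); rewrite Hzz Hm.
  apply/mapP; exists [ffun i => xchoose (Hex i)]; first by rewrite mem_enum.
  by apply/ffunP => i; rewrite !ffunE; apply/eqP; exact: (xchooseP (Hex i)).
split.
  exists S; split.
    move=> z; rewrite mem_filter => /andP [_ /mapP [f _ ->]] i.
    by exists (nat_of_ord (f i))%:Z; rewrite ffunE -pmulrn.
  move=> y; split.
    move=> Hy; apply: (inconv_hull (T := fun z => CO z /\ lattice_point z)).
      by move=> z [Hz Hlz]; apply: Hin.
    rewrite -(psi_wx Hy); apply: lat_ind; exact: Good_wx.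
  case=> c [Hc0 Hc1 ->]; apply: CO_convex => // k.
  by apply: HSCO; apply: mem_nth.
move=> n Hn y; split.
  by case=> Hy [x [Hx Ey]]; apply: (normal_back Hn Hy Hx Ey).
case=> xs [Hxs Ey]; split.
  move=> i; rewrite Ey sum_ffunE; apply: sum_int => k.
  by case: (Hxs k) => Hl _; apply: Hl.
have Hn0 : (n%:R : R) != 0 by rewrite pnatr_eq0 -lt0n.
exists (\sum_k [ffun i => n%:R^-1 * xs k i]); split.
  apply: CO_convex.
  - by move=> k; rewrite invr_ge0 ler0n.
  - rewrite sumr_const card_ord; have -> : (n%:R^-1 : R) *+ n = n%:R * n%:R^-1 by rewrite mulr_natl.
    by rewrite mulfV.
  - by move=> k; case: (Hxs k).
apply/ffunP => i; rewrite Ey !ffunE !sum_ffunE mulr_sumr; apply: eq_bigr => k _.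
by rewrite ffunE mulrA mulfV // mul1r.
Qed.

End Main.

Theorem corollary2p2 (R : realFieldType) (d : Order.disp_t) (P : finPOrderType d)
    (A U1 U2 : {set P}) (lambda : P -> nat)
    (HA : marked_set A) (Hdec : decomposition A U1 U2) (Hadm : admissible U1 U2) :
  lattice_polytope (@chain_order_polytope d P A U1 U2 lambda R) /\
  normal_polytope (@chain_order_polytope d P A U1 U2 lambda R).
Proof. exact: main_thm. Qed.
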